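(* Let $\eta_1,\dots,\eta_n$ be admissible measures on $\mathbb R$. For each $i$ let $M_i(dx):=\cosh(x)\eta_i(dx)$ (a probability measure), let $X_i\sim M_i$ be independent and $U_i:=\tanh(X_i)$. Let $\bar U:=\tanh(\bar X)$ with $\bar X\sim\frac1n\sum_iM_i$, and let $\bar U_1,\dots,\bar U_n$ be i.i.d. copies of $\bar U$. Define $V:=\sum_{i=1}^nU_i^2$ and $\bar V:=\sum_{i=1}^n\bar U_i^2$. Then $\mathbb E\sqrt{\bar V}\le\mathbb E\sqrt V$.
   Context: A finitely supported positive measure $\eta$ on $\mathbb R$ is called admissible if $\int e^x\,\eta(dx)=\int e^{-x}\,\eta(dx)=1$. *)

(* Defs.v *)
From HB Require Import structures.
From mathcomp Require Import all_boot all_order all_algebra.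
From mathcomp Require Import reals sequences exp.
Set Implicit Arguments. Unset Strict Implicit. Unset Printing Implicit Defensive.
Import Order.TTheory GRing.Theory Num.Theory.
Local Open Scope ring_scope.

Definition cosh {R : realType} (x : R) : R := (expR x + expR (- x)) / 2.
Definition tanh {R : realType} (x : R) : R :=
  (expR x - expR (- x)) / (expR x + expR (- x)).

(* A finitely supported positive measure on R is encoded as a finite list of
   (atom, weight) pairs: eta = \sum_(p <- eta) p.2 * dirac p.1, weights >= 0. *)
Definition fsmeasure (R : realType) := seq (R * R).

Definition admissible {R : realType} (eta : fsmeasure R) : Prop :=
  [/\ all (fun p => 0 <= p.2) eta,
      \sum_(p <- eta) p.2 * expR p.1 = 1 &
      \sum_(p <- eta) p.2 * expR (- p.1) = 1].

Definition coshM {R : realType} (eta : fsmeasure R) : fsmeasure R :=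
  [seq (p.1, p.2 * cosh p.1) | p <- eta].

(* Expectation of g(X_1,...,X_k) for independent X_j with (finitely supported)
   laws mus_j:  \sum_{x_1} ... \sum_{x_k} mu_1{x_1} ... mu_k{x_k} g(x_1..x_k). *)
Fixpoint Eindep {R : realType} (mus : seq (fsmeasure R)) (g : seq R -> R) : R :=
  match mus with
  | [::] => g [::]
  | mu :: mus' => \sum_(p <- mu) p.2 * Eindep mus' (fun xs => g (p.1 :: xs))
  end.

Definition mixture {R : realType} (n : nat) (mus : seq (fsmeasure R)) : fsmeasure R :=
  [seq (p.1, p.2 / n%:R) | p <- flatten mus].

Definition sqrt_sum_tanh2 {R : realType} (xs : seq R) : R :=
  Num.sqrt (\sum_(x <- xs) tanh x ^+ 2).

(* Main.v *)
Require Import Defs.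
From HB Require Import structures.
From mathcomp Require Import all_boot all_order all_algebra.
From mathcomp Require Import reals sequences exp.
From mathcomp Require Import all_classical all_reals all_analysis.
From mathcomp Require Import ring lra.
Import Order.TTheory GRing.Theory Num.Theory.
Import numFieldNormedType.Exports.
Local Open Scope classical_set_scope.
Local Open Scope ring_scope.
Section A.
Context {R : realType}.
Notation mu := (@lebesgue_measure R).
Definition fs (s r : R) : R := 1 - expR (- (s / r ^+ 2)).

Lemma fs_cont s r : r != 0 -> {for r, continuous (fs s)}.
Proof.
move=> r0.
have -> : fs s = (cst 1 - (expR \o (fun r => - (s * (r ^+ 2)^-1))))%R by apply/funext.
apply: continuousB; first exact: cvg_cst.
apply: continuous_comp; last exact: continuous_expR.
apply: continuousN.
apply: continuousM; first exact: cvg_cst.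
apply: continuousV; first by rewrite expf_neq0.
exact: exprn_continuous.
Qed.

Lemma fs_within s a b : 0 < a -> {within `[a, b], continuous (fs s)}.
Proof.
move=> a0; apply: continuous_in_subspaceT => x /set_mem /=; rewrite in_itv /= => /andP[ax _].
by apply: fs_cont; rewrite gt_eqF // (lt_le_trans a0 ax).
Qed.

Lemma fs_int s a b : 0 < a -> mu.-integrable `[a, b] (EFin \o fs s).
Proof. by move=> a0; apply: continuous_compact_integrable; [exact: segment_compact| exact: fs_within]. Qed.
Lemma fs_scale s a b : 0 < s -> 0 < a -> a <= b ->
  \int[mu]_(r in `[a, b]) fs s r =
  Num.sqrt s * \int[mu]_(r in `[a / Num.sqrt s, b / Num.sqrt s]) fs 1 r.
Proof.
move=> s0 a0 ab.
set c := Num.sqrt s.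
have c0 : 0 < c by rewrite sqrtr_gt0.
have dF : forall x, derive1 (fun x : R => c * x) x = c.
  by move=> x; rewrite derive1Ml // derive1_id mulr1.
have := @integration_by_substitution_increasing R (fun x => c * x) (fs s) (a / c) (b / c).
rewrite !(mulrC c (_ / c)) !divfK ?gt_eqF //.
rewrite /Rintegral => ->; last first.
- exact: fs_within.
- split.
  + by move=> x _; apply: derivableM => //; exact: derivable_id.
  + apply: cvg_at_right_filter; apply: cvgM; [exact: cvg_cst| exact: cvg_id].
  + apply: cvg_at_left_filter; apply: cvgM; [exact: cvg_cst| exact: cvg_id].
- by rewrite (_ : derive1 _ = cst c); [exact: is_cvg_cst| apply/funext => x; rewrite dF].
- by rewrite (_ : derive1 _ = cst c); [exact: is_cvg_cst| apply/funext => x; rewrite dF].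
- by rewrite (_ : derive1 _ = cst c); [move=> x _; exact: cvg_cst| apply/funext => x; rewrite dF].
- by move=> x y _ _ xy; rewrite ltr_pM2l.
- by rewrite ler_pM2r // invr_gt0.
set a' := a / c; set b' := b / c.
have -> : (\int[mu]_(x in `[a', b']) (((fs s \o (fun x => c * x)) * derive1 (fun x => c * x)) x)%:E
   = \int[mu]_(x in `[a', b']) (fs 1 x * c)%:E)%E.
  apply: eq_integral => x; rewrite inE /= in_itv /= => /andP[ax _].
  have x0 : 0 < x by rewrite (lt_le_trans _ ax) // divr_gt0.
  congr (_%:E); change (fs s (c * x) * derive1 (fun x => c * x) x = fs 1 x * c).
  rewrite dF /fs exprMn sqr_sqrtr ?ltW // invfM mulrA divff ?gt_eqF // mul1r.
change (Rintegral mu `[a', b'] (fun x => fs 1 x * c) = c * Rintegral mu `[a', b'] (fs 1)).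
rewrite RintegralZr; [exact: mulrC | by [] | by apply: fs_int; rewrite divr_gt0].
Qed.
Lemma Rint_split (f : R -> R) a b c : a <= b -> b <= c ->
  mu.-integrable `[a, c] (EFin \o f) ->
  \int[mu]_(x in `[a, c]) f x = \int[mu]_(x in `[a, b]) f x + \int[mu]_(x in `[b, c]) f x.
Proof.
move=> ab bc fi.
have := @Rintegral_itvB R f (BLeft a) (BRight c) b fi.
rewrite !bnd_simp => /(_ ab bc) H.
have H2 := @Rintegral_itv_obnd_cbnd R b (BRight c) f.
rewrite -H2; first by rewrite -H addrC subrK.
apply: integrableS fi => //; apply: subset_itvr; by rewrite bnd_simp.
Qed.

Lemma Rint_cst_itv (k a b : R) : a <= b -> \int[mu]_(x in `[a, b]) k = k * (b - a).
Proof.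
move=> ab; rewrite Rintegral_cst //.
have := @lebesgue_measure_itv R `[a, b]; rewrite /= lte_fin.
case: ltP => [_ ->|ba ->] /=; first by [].
have -> : b = a by apply/eqP; rewrite eq_le ba ab.
by rewrite subrr mulr0.
Qed.
Lemma cst_int (k a b : R) : mu.-integrable `[a, b] (EFin \o cst k).
Proof.
apply: continuous_compact_integrable; first exact: segment_compact.
by apply: continuous_subspaceT => x; exact: cvg_cst.
Qed.

Lemma Rint_le_cst (f : R -> R) a b k : a <= b -> mu.-integrable `[a, b] (EFin \o f) ->
  (forall x, a <= x <= b -> f x <= k) -> \int[mu]_(x in `[a, b]) f x <= k * (b - a).
Proof.
move=> ab fi fk; rewrite -Rint_cst_itv //.
by apply: le_Rintegral => //; exact: cst_int.
Qed.

Lemma Rint_ge_cst (f : R -> R) a b k : a <= b -> mu.-integrable `[a, b] (EFin \o f) ->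
  (forall x, a <= x <= b -> k <= f x) -> k * (b - a) <= \int[mu]_(x in `[a, b]) f x.
Proof.
move=> ab fi fk; rewrite -Rint_cst_itv //.
by apply: le_Rintegral => //; exact: cst_int.
Qed.

Lemma sum_cont (l : seq (R * R)) r : r != 0 ->
  {for r, continuous (fun x => \sum_(q <- l) q.1 * fs q.2 x)}.
Proof.
move=> r0; elim: l => [|q l IH].
  rewrite (_ : (fun _ => _) = cst 0); first exact: cvg_cst.
  by apply/funext => x; rewrite big_nil.
rewrite (_ : (fun _ => _) = (fun x => q.1 * fs q.2 x) + (fun x => \sum_(q <- l) q.1 * fs q.2 x)); last first.
  by apply/funext => x; rewrite big_cons.
apply: continuousD => //.
apply: continuousM; [exact: cvg_cst | exact: fs_cont].
Qed.

Lemma sum_int (l : seq (R * R)) a b : 0 < a ->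
  mu.-integrable `[a, b] (EFin \o (fun x => \sum_(q <- l) q.1 * fs q.2 x)).
Proof.
move=> a0; apply: continuous_compact_integrable; first exact: segment_compact.
apply: continuous_in_subspaceT => x /set_mem /=; rewrite in_itv /= => /andP[ax _].
by apply: sum_cont; rewrite gt_eqF // (lt_le_trans a0 ax).
Qed.

Lemma cont_int (f : R -> R) a b : 0 < a -> (forall x, x != 0 -> {for x, continuous f}) ->
  mu.-integrable `[a, b] (EFin \o f).
Proof.
move=> a0 fc; apply: continuous_compact_integrable; first exact: segment_compact.
apply: continuous_in_subspaceT => x /set_mem /=; rewrite in_itv /= => /andP[ax _].
by apply: fc; rewrite gt_eqF // (lt_le_trans a0 ax).
Qed.

Lemma Rint_sum (l : seq (R * R)) a b : 0 < a ->
  \int[mu]_(x in `[a, b]) (\sum_(q <- l) q.1 * fs q.2 x) =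
  \sum_(q <- l) q.1 * \int[mu]_(x in `[a, b]) fs q.2 x.
Proof.
move=> a0; elim: l => [|q l IH].
  rewrite big_nil; transitivity (\int[mu]_(x in `[a, b]) (cst 0 x)).
    by apply: eq_Rintegral => x _; rewrite big_nil.
  by rewrite Rintegral_cst // mul0r.
rewrite big_cons -IH -RintegralZl //; last exact: fs_int.
rewrite -RintegralD //; [|apply: cont_int => // x x0; apply: continuousM; [exact: cvg_cst|exact: fs_cont]| exact: sum_int].
by apply: eq_Rintegral => x _; rewrite big_cons.
Qed.
Lemma fs_ge0 s r : 0 <= s -> 0 <= fs s r.
Proof.
move=> s0; rewrite /fs subr_ge0 -expR0 ler_expR lerNl oppr0.
by rewrite divr_ge0 // sqr_ge0.
Qed.

Lemma fs_le1 s r : fs s r <= 1.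
Proof. by rewrite /fs lerBlDr lerDl expR_ge0. Qed.

Lemma fs1_le r : 0 < r -> fs 1 r <= (r ^+ 2)^-1.
Proof.
move=> r0; rewrite /fs mul1r lerBlDr addrC -lerBlDr.
by have := expR_ge1Dx (- (r ^+ 2)^-1); rewrite addrC.
Qed.

Lemma fs1_ge r : 0 < r -> r <= 1 -> 1 / 2 <= fs 1 r.
Proof.
move=> r0 r1; rewrite /fs mul1r.
have h1 : expR (- (r ^+ 2)^-1) <= expR (-1 : R).
  rewrite ler_expR lerN2 invf_ge1 ?exprn_gt0 //.
  by rewrite expr_le1 // ltW.
have h2 : 2 <= expR (1 : R) by have := expR_ge1Dx (1 : R).
have h3 : expR (-1 : R) <= 2^-1.
  by rewrite expRN lef_pV2 ?posrE ?expR_gt0.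
rewrite mul1r; lra.
Qed.
Lemma lower_bd (l : seq (R * R)) : all (fun q => 0 < q.2) l ->
  exists q0, 0 < q0 /\ all (fun q => q0 <= q.2) l.
Proof.
elim: l => [|q l IH] /=; first by move=> _; exists 1.
move=> /andP[q0 /IH [m [m0 /allP hm]]].
exists (Num.min q.2 m); split; first by rewrite lt_min q0 m0.
apply/andP; split; first by rewrite ge_min lexx.
apply/allP => x /hm xm; by rewrite ge_min xm orbT.
Qed.

Lemma upper_bd (l : seq (R * R)) : all (fun q => 0 < q.2) l ->
  exists P, 0 < P /\ all (fun q => q.2 <= P) l.
Proof.
elim: l => [|q l IH] /=; first by move=> _; exists 1.
move=> /andP[q0 /IH [m [m0 /allP hm]]].
exists (q.2 + m); split; first by rewrite addr_gt0.
apply/andP; split; first by rewrite lerDl ltW.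
apply/allP => x /hm xm; rewrite (le_trans xm) // lerDr ltW //.
Qed.

Lemma limit_lem (S D : R) : 0 <= D ->
  (forall d, 0 < d -> d <= 1 / 2 -> - (d * D) <= S) -> 0 <= S.
Proof.
move=> D0 H; rewrite leNgt; apply/negP => S0.
set d := Num.min (1 / 2) (- S / (2 * (D + 1))).
have d0 : 0 < d.
  rewrite lt_min; apply/andP; split; first by [].
  apply: divr_gt0; first by rewrite oppr_gt0.
  apply: mulr_gt0 => //; lra.
have d1 : d <= 1 / 2 by rewrite ge_min lexx.
have d2 : d <= - S / (2 * (D + 1)) by rewrite ge_min lexx orbT.
have := H d d0 d1.
have : d * D <= - S / (2 * (D + 1)) * D by rewrite ler_wpM2r.
have : - S / (2 * (D + 1)) * D <= - S / 2.
  have D1 : 0 < D + 1 by lra.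
  have -> : - S / (2 * (D + 1)) * D = (- S / 2) * (D / (D + 1)).
    by field; rewrite gt_eqF.
  apply: ler_piMr; first by apply: divr_ge0 => //; lra.
  by rewrite ler_pdivrMr // mul1r; lra.
lra.
Qed.
Lemma A_ge d : 0 < d -> d <= 1 / 2 ->
  1 / 4 <= \int[mu]_(x in `[d, d^-1]) fs 1 x.
Proof.
move=> d0 d12.
have d1 : d <= 1 by lra.
have d1' : 1 <= d^-1 by rewrite invf_ge1.
rewrite (@Rint_split _ _ 1) //; last exact: fs_int.
have h1 : 1 / 2 * (1 - d) <= \int[mu]_(x in `[d, 1]) fs 1 x.
  apply: Rint_ge_cst => //; first exact: fs_int.
  move=> x /andP[x1 x2]; apply: fs1_ge => //; exact: lt_le_trans x1.
have h2 : 0 <= \int[mu]_(x in `[1, d^-1]) fs 1 x.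
  by apply: Rintegral_ge0 => x _; apply: fs_ge0.
have ar : forall u v : R, 1 / 2 * (1 - d) <= u -> 0 <= v -> 1 / 4 <= u + v.
  move=> u v; lra.
exact: ar h1 h2.
Qed.

Lemma fin_arith (A S T X : R) : 1 / 4 <= A -> 0 <= X -> 0 <= A * S + T -> T <= X ->
  - (4 * X) <= S.
Proof.
move=> hA hX h1 h2.
have [S0|S0] := leP 0 S; first lra.
have : A * S <= 1 / 4 * S by rewrite ler_wnM2r // ltW.
lra.
Qed.

Lemma key (l : seq (R * R)) : all (fun q => 0 < q.2) l ->
  (forall r, 0 < r -> 0 <= \sum_(q <- l) q.1 * fs q.2 r) ->
  0 <= \sum_(q <- l) q.1 * Num.sqrt q.2.
Proof.
move=> lpos hyp.
have [q0 [q00 /allP hq0]] := @lower_bd l lpos.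
have [P' [P0 /allP hP]] := @upper_bd l lpos.
set P := P' + q0.
have hPP : forall q, q \in l -> q.2 <= P.
  by move=> q /hP h; rewrite /P; lra.
have q0P : q0 <= P by rewrite /P; lra.
set S := \sum_(q <- l) q.1 * Num.sqrt q.2.
set C := \sum_(q <- l) `|q.1| * Num.sqrt q.2.
have sq0 : 0 < Num.sqrt q0 by rewrite sqrtr_gt0.
have sqP : Num.sqrt q0 <= Num.sqrt P by rewrite ler_sqrt //; lra.
set K := Num.sqrt P / Num.sqrt q0.
have C0 : 0 <= C by apply: sumr_ge0 => q _; rewrite mulr_ge0 ?sqrtr_ge0.
have K0 : 0 <= K by rewrite divr_ge0 ?sqrtr_ge0 // ltW.
apply: (@limit_lem S (4 * (C * (1 + K)))).
  by rewrite mulr_ge0 // mulr_ge0 //; lra.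
move=> d d0 d12.
set a := d * Num.sqrt q0.
set b := Num.sqrt P / d.
have a0 : 0 < a by rewrite mulr_gt0.
have ab : a <= b.
  rewrite /a /b ler_pdivlMr //; have dd : d * d <= 1 by nra.
  rewrite mulrC mulrA; apply: le_trans sqP; rewrite ler_piMl // ?ltW //.
have d1 : d <= 1 by lra.
have d1' : 1 <= d^-1 by rewrite invf_ge1 //.
have hd : d <= d^-1 by apply: le_trans d1'.
set A := \int[mu]_(x in `[d, d^-1]) fs 1 x.
set e := fun s => \int[mu]_(x in `[a / Num.sqrt s, d]) fs 1 x +
                  \int[mu]_(x in `[d^-1, b / Num.sqrt s]) fs 1 x.
have hs : forall q, q \in l -> [/\ 0 < Num.sqrt q.2, Num.sqrt q0 <= Num.sqrt q.2,
    Num.sqrt q.2 <= Num.sqrt P, 0 < a / Num.sqrt q.2 & 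
    a / Num.sqrt q.2 <= d /\ d^-1 <= b / Num.sqrt q.2].
  move=> q ql; have s0 := allP lpos q ql.
  have ss0 : 0 < Num.sqrt q.2 by rewrite sqrtr_gt0.
  have h1 : Num.sqrt q0 <= Num.sqrt q.2.
    by rewrite ler_sqrt; [exact: hq0| exact: ltW].
  have h2 : Num.sqrt q.2 <= Num.sqrt P by rewrite ler_sqrt // ?hPP //; lra.
  split => //; first by rewrite divr_gt0.
  split.
    by rewrite ler_pdivrMr // /a ler_pM2l.
  have -> : b / Num.sqrt q.2 = (Num.sqrt P / Num.sqrt q.2) * d^-1.
    by rewrite /b; field; rewrite !gt_eqF.
  rewrite -[X in X <= _]mul1r ler_pM2r ?invr_gt0 // ler_pdivlMr // mul1r.
  by [].
have int_eq : forall q, q \in l ->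
    \int[mu]_(x in `[a, b]) fs q.2 x = Num.sqrt q.2 * (A + e q.2).
  move=> q ql; have [ss0 h1 h2 h3 [h4 h5]] := hs q ql.
  rewrite fs_scale //; last exact: allP lpos q ql.
  congr (_ * _).
  rewrite (@Rint_split _ _ d) //; last first.
    by apply: fs_int.
    by apply: le_trans h5.
  rewrite (@Rint_split _ d d^-1) //; last first.
    by apply: fs_int.
  rewrite /e /A; ring.
have e_bd : forall q, q \in l -> 0 <= e q.2 <= d * (1 + K).
  move=> q ql; have [ss0 h1 h2 h3 [h4 h5]] := hs q ql.
  have i1 : 0 <= \int[mu]_(x in `[a / Num.sqrt q.2, d]) fs 1 x.
    by apply: Rintegral_ge0 => x _; apply: fs_ge0.
  have i2 : 0 <= \int[mu]_(x in `[d^-1, b / Num.sqrt q.2]) fs 1 x.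
    by apply: Rintegral_ge0 => x _; apply: fs_ge0.
  have i3 : \int[mu]_(x in `[a / Num.sqrt q.2, d]) fs 1 x <= d.
    apply: le_trans (@Rint_le_cst _ _ _ 1 h4 (fs_int _ _ _ h3) _) _.
      by move=> x _; apply: fs_le1.
    rewrite mul1r; lra.
  have i4 : \int[mu]_(x in `[d^-1, b / Num.sqrt q.2]) fs 1 x <= d * K.
    have dI : 0 < d^-1 by rewrite invr_gt0.
    apply: le_trans (@Rint_le_cst _ _ _ (d ^+ 2) h5 (fs_int _ _ _ dI) _) _.
      move=> x /andP[x1 _]; have x0 : 0 < x by apply: lt_le_trans x1.
      apply: (le_trans (fs1_le _ x0)).
      have xd : x^-1 <= d by rewrite -(invrK d) lef_pV2 ?posrE ?invr_gt0.
      have xi : 0 <= x^-1 by rewrite invr_ge0 ltW.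
      by rewrite -exprVn !expr2; apply: ler_pM.
    have -> : d ^+ 2 * (b / Num.sqrt q.2 - d^-1) = d * (Num.sqrt P / Num.sqrt q.2) - d.
      by rewrite /b; field; rewrite !gt_eqF.
    have hK : Num.sqrt P / Num.sqrt q.2 <= K.
      rewrite /K; apply: ler_pM => //.
      by rewrite lef_pV2 ?posrE.
    apply: (le_trans (y := d * (Num.sqrt P / Num.sqrt q.2))).
      by rewrite lerBlDr lerDl ltW.
    by rewrite ler_pM2l.
  rewrite /e; apply/andP; split; first exact: addr_ge0.
  by rewrite mulrDr mulr1; apply: lerD.
have A4 : 1 / 4 <= A by apply: A_ge.
have main : 0 <= \sum_(q <- l) q.1 * (Num.sqrt q.2 * (A + e q.2)).
  have H : 0 <= \int[mu]_(x in `[a, b]) (\sum_(q <- l) q.1 * fs q.2 x).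
    apply: Rintegral_ge0 => x; rewrite /= in_itv /= => /andP[ax _].
    by apply: hyp; exact: lt_le_trans ax.
  rewrite Rint_sum // in H.
  rewrite big_seq (eq_bigr (fun q => q.1 * \int[mu]_(x in `[a, b]) fs q.2 x)) -?big_seq //.
  by move=> q ql; rewrite int_eq.
have split_eq : \sum_(q <- l) q.1 * (Num.sqrt q.2 * (A + e q.2)) =
    A * S + \sum_(q <- l) q.1 * (Num.sqrt q.2 * e q.2).
  rewrite /S mulr_sumr -big_split; apply: eq_bigr => q _ /=; ring.
have E_bd : \sum_(q <- l) q.1 * (Num.sqrt q.2 * e q.2) <= C * (d * (1 + K)).
  rewrite /C mulr_suml big_seq [X in _ <= X]big_seq; apply: ler_sum => q ql.
  have /andP[e0 e1] := e_bd q ql.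
  have sq : 0 <= Num.sqrt q.2 := sqrtr_ge0 _.
  apply: (le_trans (y := `|q.1| * (Num.sqrt q.2 * e q.2))).
    by rewrite ler_wpM2r ?mulr_ge0 // real_ler_norm // num_real.
  by rewrite -mulrA ler_wpM2l // ler_wpM2l.
rewrite split_eq in main.
have -> : d * (4 * (C * (1 + K))) = 4 * (C * (d * (1 + K))) by ring.
apply: fin_arith main E_bd => //.
by rewrite mulr_ge0 // mulr_ge0 //; [exact: ltW | rewrite addr_ge0].
Qed.
Lemma key2 (l : seq (R * R)) : all (fun q => 0 <= q.2) l ->
  (forall r, 0 < r -> 0 <= \sum_(q <- l) q.1 * fs q.2 r) ->
  0 <= \sum_(q <- l) q.1 * Num.sqrt q.2.
Proof.
move=> /allP l0 hyp.
have E : forall F : R -> R, F 0 = 0 ->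
    \sum_(q <- l) q.1 * F q.2 = \sum_(q <- seq.filter (fun q => 0 < q.2) l) q.1 * F q.2.
  move=> F F0; rewrite big_filter [RHS]big_mkcond /= [LHS]big_seq [RHS]big_seq; apply: eq_bigr => q ql.
  case: ifP => // /negbT; rewrite -leNgt => q2.
  have -> : q.2 = 0 by apply/eqP; rewrite eq_le q2 l0.
  by rewrite F0 mulr0.
rewrite E ?sqrtr0 //; apply: key; first by apply/allP => q; rewrite mem_filter => /andP[].
move=> r r0; rewrite -(E (fun s => fs s r)); first exact: hyp.
by rewrite /fs mul0r oppr0 expR0 subrr.
Qed.
End A.

Local Close Scope classical_set_scope.

Section B.
Context {R : realType}.

Definition Ssum (xs : seq R) : R := \sum_(x <- xs) tanh x ^+ 2.

Fixpoint Dl (mus : seq (fsmeasure R)) : seq (R * R) :=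
  match mus with
  | [::] => [:: (1, 0)]
  | mu :: mus' => flatten [seq [seq (p.2 * q.1, tanh p.1 ^+ 2 + q.2) | q <- Dl mus'] | p <- mu]
  end.

Lemma Eindep_ext (mus : seq (fsmeasure R)) (g g' : seq R -> R) :
  (forall xs, g xs = g' xs) -> Eindep mus g = Eindep mus g'.
Proof.
elim: mus g g' => [|mu mus IH] g g' H /=; first exact: H.
by apply: eq_bigr => p _; congr (_ * _); apply: IH => xs.
Qed.

Lemma Eindep_Dl (mus : seq (fsmeasure R)) (h : R -> R) (c : R) :
  Eindep mus (fun xs => h (c + Ssum xs)) = \sum_(q <- Dl mus) q.1 * h (c + q.2).
Proof.
elim: mus h c => [|mu mus IH] h c /=.
  by rewrite big_cons big_nil mul1r addr0 /Ssum big_nil.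
rewrite big_flatten /= big_map; apply: eq_bigr => p _.
rewrite (@Eindep_ext _ _ (fun xs => h ((c + tanh p.1 ^+ 2) + Ssum xs))); last first.
  by move=> xs; rewrite /Ssum big_cons addrA.
rewrite IH big_map mulr_sumr; apply: eq_bigr => q _ /=.
by rewrite mulrA addrA.
Qed.

Lemma Dl_ge0 (mus : seq (fsmeasure R)) : all (fun q => 0 <= q.2) (Dl mus).
Proof.
elim: mus => [|mu mus IH] /=; first by rewrite lexx.
apply/allP => q /flattenP [s /mapP [p _ ->]] /mapP [q' q'D ->] /=.
by rewrite addr_ge0 ?sqr_ge0 //; exact: (allP IH).
Qed.

Definition Lap (mu : fsmeasure R) (u : R) : R :=
  \sum_(p <- mu) p.2 * expR (- (tanh p.1 ^+ 2 * u)).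

Lemma Dl_Lap (mus : seq (fsmeasure R)) u :
  \sum_(q <- Dl mus) q.1 * expR (- (q.2 * u)) = \prod_(mu <- mus) Lap mu u.
Proof.
elim: mus => [|mu mus IH] /=.
  by rewrite big_cons !big_nil mul0r oppr0 expR0 mulr1 addr0.
rewrite big_cons big_flatten /= big_map /Lap big_distrl /=; apply: eq_bigr => p _.
rewrite big_map -IH mulr_sumr; apply: eq_bigr => q _ /=.
by rewrite mulrDl opprD expRD; ring.
Qed.
Lemma Lap_mixture n (M : seq (fsmeasure R)) u :
  Lap (mixture n M) u = (\sum_(mu <- M) Lap mu u) / n%:R.
Proof.
rewrite /Lap /mixture big_map big_flatten /= mulr_suml; apply: eq_bigr => mu _.
by rewrite mulr_suml; apply: eq_bigr => p _ /=; rewrite mulrAC.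
Qed.

Lemma Lap_coshM_ge0 (eta : fsmeasure R) u : admissible eta -> 0 <= Lap (coshM eta) u.
Proof.
case=> /allP h _ _; rewrite /Lap /coshM big_map big_seq; apply: sumr_ge0 => p pe /=.
apply: mulr_ge0; last exact: expR_ge0.
apply: mulr_ge0; first exact: (h p pe).
rewrite /cosh; apply: mulr_ge0; first by apply: addr_ge0; exact: expR_ge0.
by rewrite invr_ge0.
Qed.

Lemma Lap_coshM_0 (eta : fsmeasure R) : admissible eta -> Lap (coshM eta) 0 = 1.
Proof.
case=> _ h1 h2; rewrite /Lap /coshM big_map.
under eq_bigr do rewrite /= mulr0 oppr0 expR0 mulr1 /cosh mulrA mulrDr.
by rewrite -mulr_suml big_split /= h1 h2; field.
Qed.

Lemma prod_nseq (F : fsmeasure R -> R) n a : \prod_(x <- nseq n a) F x = F a ^+ n.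
Proof. by elim: n => [|n IH]; rewrite ?big_nil ?expr0 // big_cons IH exprS. Qed.

Lemma Dl_fs (mus : seq (fsmeasure R)) r :
  \sum_(q <- Dl mus) q.1 * fs q.2 r =
  \prod_(mu <- mus) Lap mu 0 - \prod_(mu <- mus) Lap mu ((r ^+ 2)^-1).
Proof.
rewrite -!Dl_Lap -sumrB; apply: eq_bigr => q _.
by rewrite /fs mulr0 oppr0 expR0 mulr1 mulrBr mulr1.
Qed.
End B.


Theorem lemma5 (R : realType) (n : nat) (eta : 'I_n -> fsmeasure R)
  (hadm : forall i, admissible (eta i)) :
  let M := [seq coshM (eta i) | i <- enum 'I_n] in
  Eindep (nseq n (mixture n M)) sqrt_sum_tanh2 <= Eindep M sqrt_sum_tanh2.
Proof.
case: n eta hadm => [|n] eta hadm.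
  cbv zeta; have -> : enum 'I_0 = [::] by apply/nilP; rewrite /nilp size_enum_ord.
  by [].
cbv zeta; set M := [seq coshM (eta i) | i <- enum 'I_n.+1].
have E1 : forall mus : seq (fsmeasure R), Eindep mus sqrt_sum_tanh2 = \sum_(q <- Dl mus) q.1 * Num.sqrt q.2.
  move=> mus; rewrite (@Eindep_ext _ _ _ (fun xs => Num.sqrt (0 + Ssum xs))).
    by rewrite Eindep_Dl; apply: eq_bigr => q _; rewrite add0r.
  by move=> xs; rewrite add0r.
rewrite !E1 -subr_ge0.
set l := Dl M ++ [seq (- q.1, q.2) | q <- Dl (nseq n.+1 (mixture n.+1 M))].
have El : forall F : R -> R, \sum_(q <- l) q.1 * F q.2 =
    \sum_(q <- Dl M) q.1 * F q.2 - \sum_(q <- Dl (nseq n.+1 (mixture n.+1 M))) q.1 * F q.2.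
  move=> F; rewrite big_cat big_map /= -sumrN; congr (_ + _).
  by apply: eq_bigr => q _; rewrite mulNr.
rewrite -(El Num.sqrt); apply: key2.
  rewrite all_cat Dl_ge0 /= all_map; apply/allP => q qD /=.
  by move: (Dl_ge0 (nseq n.+1 (mixture n.+1 M))) => /allP; apply.
move=> r r0; rewrite (El (fun s => fs s r)) !Dl_fs prod_nseq.
set u := (r ^+ 2)^-1.
have prodM : forall v, \prod_(mu <- M) Lap mu v = \prod_(i < n.+1) Lap (coshM (eta i)) v.
  by move=> v; rewrite big_map big_enum.
have sumM : forall v, \sum_(mu <- M) Lap mu v = \sum_(i < n.+1) Lap (coshM (eta i)) v.
  by move=> v; rewrite big_map big_enum.
have M0 : \prod_(mu <- M) Lap mu 0 = 1.
  by rewrite prodM big1 // => i _; apply: Lap_coshM_0.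
have mix0 : Lap (mixture n.+1 M) 0 ^+ n.+1 = 1.
  rewrite Lap_mixture sumM (eq_bigr (fun => 1)); last by move=> i _; apply: Lap_coshM_0.
  by rewrite sumr_const card_ord divff ?expr1n // pnatr_eq0.
have AMGM : \prod_(mu <- M) Lap mu u <= Lap (mixture n.+1 M) u ^+ n.+1.
  rewrite prodM /(mixture n.+1 M) Lap_mixture sumM.
  have H := @leif_AGM R 'I_n.+1 predT (fun i => Lap (coshM (eta i)) u)
    (fun i _ => @Lap_coshM_ge0 R (eta i) u (hadm i)).
  move: H.1; rewrite card_ord /=.
  by [].
rewrite M0 mix0 prod_nseq; move: AMGM; lra.
Qed.
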